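(* Let $(G,t)$ be a non-trivial problem instance, let $X$ be a tidy modulator of $G$, and let $B$ be a biconnected induced subgraph of $G-X$. Then $|\partial_G(V(B))|\le 2|X|$.
   Context: $\mathrm{tw}$ is treewidth. A problem instance is $(G,t)$ with $t\in\mathbb{N}$. A modulator of $G$ is $X$ with $\mathrm{tw}(G-X)\le 2$; tidy if also $\mathrm{tw}(G-(X\setminus\{x\}))\le 2$ for all $x\in X$. $(G,t)$ is trivial if $|V(G)|\le 4$, or $\mathrm{tw}(G)\le 2$, or $t=0$, or some connected subgraph $H$ of $G$ satisfies $\mathrm{tw}\big(G[N_G[H]]\cup\binom{N_G(H)}{2}\big)\le 2$ (where $N_G(H)$ is the set of vertices outside $H$ adjacent to $H$, $N_G[H]=V(H)\cup N_G(H)$, and $\cup\binom{N_G(H)}{2}$ adds all edges among $N_G(H)$); otherwise non-trivial. A graph is biconnected if it is connected and has no articulation vertex. For $U\subseteq V(G)$, $\partial_G(U)$ is the set of vertices of $U$ having a neighbour outside $U$. *)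

(* Defs.v *)
From mathcomp Require Import all_boot.
Set Implicit Arguments. Unset Strict Implicit. Unset Printing Implicit Defensive.

(* Subgraphs considered here
   are described by a vertex set V : {set T} together with an edge relation
   E : rel T, of which only the pairs inside V are relevant. *)

Definition restr (T : finType) (V : {set T}) (E : rel T) : rel T :=
  [rel x y | [&& x \in V, y \in V & E x y]].

(* A finite tree on the node type I: symmetric, irreflexive, nonempty,
   connected, with exactly |I| - 1 (unordered) edges. *)
Definition is_tree (I : finType) (tI : rel I) : Prop :=
  [/\ symmetric tI, irreflexive tI, 0 < #|I|,
      (forall i j, connect tI i j) &
      #|[set p : I * I | tI p.1 p.2]| = 2 * (#|I| - 1)].

Definition tree_decomp_width (T : finType) (V : {set T}) (E : rel T)
    (I : finType) (tI : rel I) (bag : I -> {set T}) (k : nat) : Prop :=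
  is_tree tI /\ (forall i, bag i \subset V) /\
  [/\
      (forall v, v \in V -> exists i, v \in bag i),
      (forall u v, u \in V -> v \in V -> E u v ->
         exists i, (u \in bag i) && (v \in bag i)),
      (forall v i j, v \in bag i -> v \in bag j ->
         connect [rel a b | [&& tI a b, v \in bag a & v \in bag b]] i j) &
      (forall i, #|bag i| <= k.+1)].

Definition tw_le (T : finType) (V : {set T}) (E : rel T) (k : nat) : Prop :=
  exists (I : finType) (tI : rel I) (bag : I -> {set T}),
    tree_decomp_width V E tI bag k.

Definition modulator (T : finType) (e : rel T) (X : {set T}) : Prop :=
  tw_le (~: X) e 2.

Definition tidy_modulator (T : finType) (e : rel T) (X : {set T}) : Prop :=
  modulator e X /\ (forall x, x \in X -> tw_le (~: (X :\ x)) e 2).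

Definition nbh (T : finType) (e : rel T) (S : {set T}) : {set T} :=
  [set v | (v \notin S) && [exists u in S, e u v]].

Definition connected_subgraph (T : finType) (e : rel T) (S : {set T})
    (F : rel T) : Prop :=
  [/\ (forall u v, u \in S -> v \in S -> F u v -> e u v),
      S != set0 &
      (forall u v, u \in S -> v \in S -> connect (restr S F) u v)].

Definition torso_edges (T : finType) (e : rel T) (S : {set T}) : rel T :=
  [rel u v | e u v || [&& u \in nbh e S, v \in nbh e S & u != v]].

Definition trivial_instance (T : finType) (e : rel T) (t : nat) : Prop :=
  [\/ #|T| <= 4,
      tw_le [set: T] e 2,
      t = 0 |
      exists (S : {set T}) (F : rel T),
        connected_subgraph e S F /\ tw_le (S :|: nbh e S) (torso_edges e S) 2].

Definition connected_set (T : finType) (e : rel T) (S : {set T}) : Prop :=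
  S != set0 /\ (forall u v, u \in S -> v \in S -> connect (restr S e) u v).

Definition biconnected_set (T : finType) (e : rel T) (S : {set T}) : Prop :=
  connected_set e S /\
  (forall w, w \in S -> forall u v, u \in S :\ w -> v \in S :\ w ->
     connect (restr (S :\ w) e) u v).

Definition boundary (T : finType) (e : rel T) (U : {set T}) : {set T} :=
  [set u in U | [exists v, (v \notin U) && e u v]].

(* Main.v *)
Require Import Defs.
From mathcomp Require Import all_boot zify.
Set Implicit Arguments. Unset Strict Implicit. Unset Printing Implicit Defensive.

Lemma connect_exit (T : finType) (r : rel T) (A : {set T}) x y :
  connect r x y -> x \in A -> y \notin A ->
  exists z z', [/\ z \in A, z' \notin A & r z z'].
Proof.
move=> /connectP [p pth ->] {y}; elim: p x pth => [|z p IH] x /=.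
  by move=> _ H1 H2; rewrite H1 in H2.
case/andP=> rxz pth xA lA; case: (boolP (z \in A)) => zA.
  exact: IH pth zA lA.
by exists x, z.
Qed.

Lemma restr_mono (T : finType) (r : rel T) (A B : {set T}) x y :
  A \subset B -> connect (restr A r) x y -> connect (restr B r) x y.
Proof.
move=> sAB; apply: connect_sub => u v /and3P [uA vA ruv]; apply: connect1.
by rewrite /restr /= (subsetP sAB _ uA) (subsetP sAB _ vA).
Qed.

Lemma restr_sym (T : finType) (r : rel T) (A : {set T}) :
  symmetric r -> symmetric (restr A r).
Proof. by move=> sr x y; rewrite /restr /= sr; case: (x \in A); case: (y \in A). Qed.

Lemma path_restr_all (T : finType) (r : rel T) (R : {set T}) v p :
  path (restr R r) v p -> all (mem R) p.
Proof.
elim: p v => [|z p IH] v //= /andP [/and3P [_ zR _] pth].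
by rewrite zR (IH z pth).
Qed.

Lemma connect_restr_in (T : finType) (r : rel T) (R : {set T}) v w :
  connect (restr R r) v w -> v \in R -> w \in R.
Proof.
move=> /connectP [p pth ->] vR.
have := mem_last v p; rewrite inE => /orP [/eqP -> //|].
by move/(allP (path_restr_all pth)).
Qed.

Definition gcomp (T : finType) (r : rel T) (R : {set T}) v :=
  [set w | connect (restr R r) v w].

Lemma comp_id (T : finType) (r : rel T) (R : {set T}) v : v \in gcomp r R v.
Proof. by rewrite inE connect0. Qed.

Lemma comp_sub (T : finType) (r : rel T) (R : {set T}) v :
  v \in R -> gcomp r R v \subset R.
Proof. by move=> vR; apply/subsetP => w; rewrite inE => /connect_restr_in; apply. Qed.

Lemma comp_conn (T : finType) (r : rel T) (R : {set T}) v :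
  symmetric r -> forall u w, u \in gcomp r R v -> w \in gcomp r R v ->
  connect (restr (gcomp r R v) r) u w.
Proof.
move=> sr.
have key: forall x, x \in gcomp r R v -> connect (restr (gcomp r R v) r) v x.
  move=> x; rewrite inE => /connectP [p pth ->].
  have aux : forall y q, connect (restr R r) v y ->
      connect (restr (gcomp r R v) r) v y -> path (restr R r) y q ->
      connect (restr (gcomp r R v) r) v (last y q).
    move=> y q; elim: q y => [|z q IH] y //= cy cy' /andP [ryz pth'].
    have cz : connect (restr R r) v z by apply: connect_trans cy (connect1 ryz).
    apply: (IH z cz _ pth'); apply: connect_trans cy' (connect1 _).
    rewrite /restr /= !inE cy cz; by case/and3P: ryz.
  by apply: aux pth; apply: connect0.
move=> u w /key cu /key cw.
have ss := sym_connect_sym (restr_sym (gcomp r R v) sr).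
by apply: connect_trans cw; rewrite ss.
Qed.

Lemma comp_ext (T : finType) (r : rel T) (R : {set T}) v x y :
  x \in gcomp r R v -> x \in R -> y \in R -> r x y -> y \in gcomp r R v.
Proof.
rewrite !inE => cx xR yR rxy; apply: connect_trans cx (connect1 _).
by rewrite /restr /= xR yR.
Qed.

Definition subtree (I : finType) (r : rel I) (S : {set I}) :=
  forall i j, i \in S -> j \in S -> connect (restr S r) i j.

Definition nedges (I : finType) (r : rel I) (U : {set I}) :=
  #|[set p : I * I | [&& p.1 \in U, p.2 \in U & r p.1 p.2]]|.

Lemma nedges_sum (I : finType) (r : rel I) (U : {set I}) :
  nedges r U = \sum_(i in U) #|[set j in U | r i j]|.
Proof.
rewrite /nedges -sum1_card.
rewrite (eq_bigr (fun i => \sum_(j in [set j in U | r i j]) 1)); last by move=> i _; rewrite sum1_card.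
rewrite pair_big_dep; apply: eq_bigl => -[x y] /=; by rewrite !inE.
Qed.

Lemma path_restr_mono (T : finType) (r : rel T) (A B : {set T}) x p :
  path (restr A r) x p -> all (mem B) p -> x \in B -> path (restr B r) x p.
Proof.
elim: p x => [|z p IH] x //= /andP [/and3P [_ _ rxz] pth] /andP [zB aB] xB.
by rewrite /restr /= xB zB rxz /= (IH z pth aB zB).
Qed.

Lemma leaf_exists (I : finType) (r : rel I) (U : {set I}) :
  symmetric r -> irreflexive r -> subtree r U -> nedges r U = 2 * (#|U| - 1) ->
  1 < #|U| ->
  exists l m, [/\ l \in U, m \in U, r l m & forall y, y \in U -> r l y -> y = m].
Proof.
move=> sr ir st ne U2.
case: (boolP [exists i in U, #|[set j in U | r i j]| <= 1]).
  case/exists_inP => i iU Ni.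
  have [j jU ji] : exists2 j, j \in U & j != i.
    case/card_gt1P: U2 => x [y [xU yU xy]].
    case: (eqVneq x i) => [xi|xi]; last by exists x.
    by exists y => //; rewrite -xi eq_sym.
  have := connect_exit (A := [set i]) (st _ _ iU jU); rewrite !inE eqxx ji.
  case=> // z [z' [zi z'i /and3P [_ z'U riz']]].
  move: zi z'i riz'; rewrite !inE => /eqP -> z'i riz'.
  have : #|[set j in U | r i j]| == 1.
    rewrite eqn_leq Ni card_gt0; apply/set0Pn; exists z'; by rewrite inE z'U.
  case/cards1P => m Nm.
  have mU : m \in [set j in U | r i j] by rewrite Nm inE.
  rewrite inE in mU; case/andP: mU => mU rim.
  exists i, m; split=> // y yU riy.
  have : y \in [set j in U | r i j] by rewrite inE yU.
  by rewrite Nm inE => /eqP.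
rewrite negb_exists => /forallP H.
have : \sum_(i in U) 2 <= \sum_(i in U) #|[set j in U | r i j]|.
  apply: leq_sum => i iU; have := H i; by rewrite iU ltnNge.
rewrite -nedges_sum ne sum_nat_const.
move: U2; case: #|U| => // n _; rewrite subn1 /=; lia.
Qed.

Lemma subtree_leaf (I : finType) (r : rel I) (U A : {set I}) l m :
  symmetric r -> A \subset U -> (forall y, y \in U -> r l y -> y = m) ->
  subtree r A -> subtree r (A :\ l).
Proof.
move=> sr sAU leaf st i j; rewrite !inE => /andP [il iA] /andP [jl jA].
have := st _ _ iA jA => /connectP [p pth Ej].
move: jl; rewrite Ej.
case: (shortenP pth) => p' pth' uq _ lastl.
apply/connectP; exists p' => //.
have allA := path_restr_all pth'.
have lp : l \notin p'.
  apply/negP => lp; move: pth' uq lastl allA.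
  case/splitPr: lp => p1 p2.
  case: p2 => [|h p3]; first by rewrite last_cat /= eqxx.
  rewrite cat_path /= => /and3P [_ /and3P [lA _ rl] /andP [/and3P [_ hA rlh] _]].
  move=> uq _ allA.
  have hm : h = m by apply: leaf => //; apply: (subsetP sAU).
  have lm : last i p1 = m.
    apply: leaf; first by apply: (subsetP sAU).
    by rewrite sr.
  have : m \in i :: p1 by rewrite -lm mem_last.
  rewrite inE => /orP [/eqP mi|mp1].
    move: uq => /= /andP [H _]; apply: (negP H); by rewrite mem_cat !inE -mi -hm eqxx !orbT.
  move: uq => /= /andP [_]; rewrite cat_uniq => /and3P [_ H _]; apply: (negP H).
  apply/hasP; exists h; first by rewrite !inE eqxx orbT.
  by rewrite hm.
apply: path_restr_mono pth' _ _; last by rewrite !inE il iA.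
apply/allP => z zp; have zA : z \in A := allP allA z zp.
rewrite !inE zA andbT.
by apply: contraNneq lp => <-.
Qed.

Lemma leaf_nb (I : finType) (r : rel I) (U A : {set I}) l m :
  A \subset U -> (forall y, y \in U -> r l y -> y = m) -> subtree r A ->
  l \in A -> A :\ l != set0 -> m \in A.
Proof.
move=> sAU leaf st lA /set0Pn [y]; rewrite inE => /andP [yl yA].
have [z [z' [zi z'i /and3P [_ z'A rz']]]] :=
  @connect_exit _ _ [set l] _ _ (st _ _ lA yA) (set11 l) yl.
move: zi z'i rz'; rewrite !inE => /eqP -> z'i rz'.
by rewrite -(leaf z') // (subsetP sAU).
Qed.

Lemma helly (I K : finType) (r : rel I) (k0 : K) :
  symmetric r -> irreflexive r -> forall n (U : {set I}), #|U| <= n -> subtree r U ->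
  nedges r U = 2 * (#|U| - 1) ->
  forall S : K -> {set I}, (forall a, S a \subset U) -> (forall a, S a != set0) ->
  (forall a, subtree r (S a)) -> (forall a b, S a :&: S b != set0) ->
  exists i, forall a, i \in S a.
Proof.
move=> sr ir n; elim: n => [|n IH] U Un stU neU S SU Sne Sst Spw.
  case/set0Pn: (Sne k0) => x /(subsetP (SU k0)) xU.
  by move: Un; rewrite leqn0 cards_eq0 => /eqP U0; rewrite U0 inE in xU.
case: (leqP #|U| 1) => [U1|U2].
  case/set0Pn: (Sne k0) => x xS; exists x => a.
  case/set0Pn: (Sne a) => y yS.
  have E := card_le1_eqP U1 y x (subsetP (SU a) _ yS) (subsetP (SU k0) _ xS).
  by move: yS; rewrite E.
have [l [m [lU mU rlm leaf]]] := leaf_exists sr ir stU neU U2.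
have ml : m != l by apply: contraTneq rlm => ->; rewrite ir.
case: (boolP [exists a, S a :\ l == set0]).
  case/existsP => a0 /eqP S0; exists l => b.
  case/set0Pn: (Spw a0 b) => z; rewrite inE => /andP [za zb].
  case: (eqVneq z l) => [<- //|zl].
  have : z \in S a0 :\ l by rewrite in_setD1 zl.
  by rewrite S0 inE.
rewrite negb_exists => /forallP Sne'.
have cU := cardsD1 l U; rewrite lU /= in cU.
have [i Hi] : exists i, forall a, i \in S a :\ l.
  apply: (IH (U :\ l)) => //.
  - by move: Un; rewrite cU.
  - exact: subtree_leaf sr (subxx U) leaf stU.
  - set E := [set p : I * I | [&& p.1 \in U, p.2 \in U & r p.1 p.2]].
    have EE : [set p : I * I | [&& p.1 \in U :\ l, p.2 \in U :\ l & r p.1 p.2]]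
        = E :\ (l, m) :\ (m, l).
      apply/setP => -[x y]; rewrite !inE /= !xpair_eqE.
      apply/idP/idP.
        case/and3P => /andP [xl xU] /andP [yl yU] rxy; rewrite xU yU rxy !andbT.
        apply/andP; split; apply/negP => /andP [/eqP ex /eqP ey].
          by rewrite ey eqxx in yl.
        by rewrite ex eqxx in xl.
      case/and5P => H1 H2 xU yU rxy; rewrite xU yU rxy !andbT.
      apply/andP; split; apply/eqP => ex.
        move: H2; rewrite ex eqxx (leaf y yU) ?eqxx //; by rewrite -ex.
      move: H1; rewrite ex eqxx (leaf x xU) ?eqxx //; by rewrite sr -ex.
    rewrite /nedges EE.
    have c1 := cardsD1 (l, m) E; have c2 := cardsD1 (m, l) (E :\ (l, m)).
    have lmE : (l, m) \in E by rewrite inE lU mU rlm.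
    have mlE : (m, l) \in E :\ (l, m).
      by rewrite !inE /= xpair_eqE (negbTE ml) mU lU sr rlm.
    rewrite lmE in c1; rewrite mlE in c2.
    move: neU; rewrite /nedges -/E c1 c2 cU; lia.
  - by move=> a; apply: setSD.
  - by move=> a; apply: subtree_leaf sr (SU a) leaf (Sst a).
  - move=> a b; case/set0Pn: (Spw a b) => z; rewrite inE => /andP [za zb].
    case: (eqVneq z l) => [zl|zl]; last by apply/set0Pn; exists z; rewrite !inE zl za zb.
    rewrite zl in za zb.
    have ma := leaf_nb (SU a) leaf (Sst a) za (Sne' a).
    have mb := leaf_nb (SU b) leaf (Sst b) zb (Sne' b).
    by apply/set0Pn; exists m; rewrite !inE ml ma mb.
by exists i => a; have := Hi a; rewrite inE => /andP [].
Qed.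

Lemma meet_conn (T I : finType) (V : {set T}) (E : rel T) (tI : rel I)
    (bag : I -> {set T}) k (P : {set T}) :
  tree_decomp_width V E tI bag k -> P \subset V ->
  (forall x y, x \in P -> y \in P -> connect (restr P E) x y) ->
  subtree tI [set i | [exists v in P, v \in bag i]].
Proof.
case=> _ [_ [cov edg bconn _]] sPV Pc.
set S := [set i | [exists v in P, v \in bag i]].
have vc : forall v i j, v \in P -> v \in bag i -> v \in bag j -> connect (restr S tI) i j.
  move=> v i j vP vi vj; apply: connect_sub (bconn v i j vi vj) => a b /and3P [tab va vb].
  apply: connect1; rewrite /restr /= tab !inE andbT.
  by apply/andP; split; apply/existsP; exists v; rewrite vP.
have aux : forall q v i, v \in P -> v \in bag i -> path (restr P E) v q ->
    forall j, last v q \in bag j -> connect (restr S tI) i j.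
  elim=> [|w q IH] v i vP vi /=; first by move=> _ j; apply: vc.
  case/andP=> /and3P [_ wP Evw] pth j lj.
  have [l /andP [vl wl]] := edg v w (subsetP sPV _ vP) (subsetP sPV _ wP) Evw.
  apply: connect_trans (vc v i l vP vi vl) _.
  exact: IH wP wl pth j lj.
move=> i j; rewrite !inE => /exists_inP [v1 v1P v1i] /exists_inP [v2 v2P v2j].
have := Pc _ _ v1P v2P => /connectP [q pth E2].
by apply: (aux _ _ _ v1P v1i pth j); rewrite -E2.
Qed.

Lemma noK4 (T : finType) (V : {set T}) (E : rel T) (Z : 'I_4 -> {set T}) :
  tw_le V E 2 -> (forall a, Z a \subset V) -> (forall a, Z a != set0) ->
  (forall a x y, x \in Z a -> y \in Z a -> connect (restr (Z a) E) x y) ->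
  (forall a b, a != b -> [disjoint Z a & Z b]) ->
  (forall a b, a != b -> exists x y, [/\ x \in Z a, y \in Z b & E x y]) -> False.
Proof.
case=> I [tI [bag td]] ZV Zne Zc Zd Za.
have td' := td.
case: td => [[sym irr I0 conn ne] [bsub [cov edg bconn wid]]].
set S := fun a => [set i | [exists v in Z a, v \in bag i]].
have Sne : forall a, S a != set0.
  move=> a; case/set0Pn: (Zne a) => v va.
  have [i vi] := cov v (subsetP (ZV a) _ va).
  by apply/set0Pn; exists i; rewrite inE; apply/exists_inP; exists v.
have [n Hn] : exists i, forall a, i \in S a.
  apply: (@helly I _ tI ord0 sym irr #|I| setT) => //.
  - by rewrite cardsT.
  - move=> i j _ _; rewrite (@eq_connect _ _ tI) ?conn //.
    by move=> x y; rewrite /restr /= !inE.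
  - rewrite cardsT /nedges -ne; apply: eq_card => p; by rewrite !inE.
  - by move=> a; exact: (meet_conn td' (ZV a) (Zc a)).
  - move=> a b; case: (eqVneq a b) => [<-|ab]; first by rewrite setIid.
    have [x [y [xa yb Exy]]] := Za a b ab.
    have [i /andP [xi yi]] := edg x y (subsetP (ZV a) _ xa) (subsetP (ZV b) _ yb) Exy.
    apply/set0Pn; exists i; rewrite !inE; apply/andP; split; apply/exists_inP.
      by exists x.
    by exists y.
have [f Hf] : exists f : 'I_4 -> T, forall a, f a \in Z a /\ f a \in bag n.
  apply: (@fin_all_exists _ (fun _ => T) (fun a v => v \in Z a /\ v \in bag n)) => a; have := Hn a; rewrite inE => /exists_inP [v va vn].
  by exists v.
have finj : injective f.
  move=> a b fab; apply/eqP; apply: contraT => ab.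
  have := disjointFr (Zd a b ab) (proj1 (Hf a)); by rewrite fab (proj1 (Hf b)).
have : #|[set f a | a in 'I_4]| <= #|bag n|.
  by apply: subset_leq_card; apply/subsetP => x /imsetP [a _ ->]; exact: (proj2 (Hf a)).
by rewrite card_imset // card_ord; move: (wid n); lia.
Qed.

Lemma tw_mono (T : finType) (V : {set T}) (E E2 : rel T) k :
  tw_le V E k -> (forall a b, a \in V -> b \in V -> E2 a b -> E a b) -> tw_le V E2 k.
Proof.
case=> I [tI [bag [tr [bsub [cov edg bconn wid]]]]] H.
exists I, tI, bag; split=> //; split=> //; split=> // u v uV vV E2uv.
exact: edg (H _ _ uV vV E2uv).
Qed.

Definition crel (T : finType) (E : rel T) (P : {set T}) (p : T) : rel T :=
  [rel a b | E a b || ((b == p) && [exists w in P, E a w])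
             || ((a == p) && [exists w in P, E b w])].

Lemma contract (T : finType) (V W P : {set T}) (E : rel T) (p : T) k :
  tw_le V E k -> W \subset V -> P \subset V -> p \in P -> p \in W ->
  (forall w, w \in W -> w \in P -> w = p) ->
  (forall x y, x \in P -> y \in P -> connect (restr P E) x y) ->
  tw_le W (crel E P p) k.
Proof.
case=> I [tI [bag td]] sWV sPV pP pW Wp Pc.
have td' := td.
case: td => [tr [bsub [cov edg bconn wid]]].
pose f := fun v => if v \in P then p else v.
have fW : forall w, w \in W -> f w = w.
  by move=> w wW; rewrite /f; case: ifP => // wP; rewrite (Wp w wW wP).
have fP : forall w, w \in P -> f w = p by move=> w wP; rewrite /f wP.
have inb : forall i w, w \in bag i -> f w \in W -> f w \in [set f v | v in bag i] :&: W.
  by move=> i w wi fwW; rewrite inE fwW andbT; apply/imsetP; exists w.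
exists I, tI, (fun i => [set f v | v in bag i] :&: W).
split=> //; split; first by move=> i; apply: subsetIr.
split.
- move=> v vW; have [i vi] := cov v (subsetP sWV _ vW).
  by exists i; rewrite -{1}(fW v vW); apply: inb; rewrite ?fW.
- move=> a b aW bW /= /orP [/orP [Eab|/andP [/eqP bp /exists_inP [w wP Eaw]]]|
                            /andP [/eqP ap /exists_inP [w wP Ebw]]].
  + have [i /andP [ai bi]] := edg a b (subsetP sWV _ aW) (subsetP sWV _ bW) Eab.
    exists i; rewrite -{1}(fW a aW) -{1}(fW b bW).
    by rewrite (inb i a) ?(inb i b) ?(fW a aW) ?(fW b bW).
  + have [i /andP [ai wi]] := edg a w (subsetP sWV _ aW) (subsetP sPV _ wP) Eaw.
    exists i; rewrite -{1}(fW a aW) bp -{1}(fP w wP).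
    by rewrite (inb i a) ?(inb i w) ?(fW a aW) ?(fP w wP).
  + have [i /andP [bi wi]] := edg b w (subsetP sWV _ bW) (subsetP sPV _ wP) Ebw.
    exists i; rewrite -{1}(fW b bW) ap -{1}(fP w wP) andbC.
    by rewrite (inb i b) ?(inb i w) ?(fW b bW) ?(fP w wP).
- move=> v i j; rewrite !inE => /andP [/imsetP [u ui ->] fuW] /andP [/imsetP [u' u'i Eu'] _].
  case: (boolP (u \in P)) => uP.
    have fup : f u = p by apply: fP.
    have u'P : u' \in P.
      case: (boolP (u' \in P)) => // u'P; move: Eu'; rewrite fup /f (negbTE u'P) => Ep.
      by rewrite -Ep pP in u'P.
    have := meet_conn td' sPV Pc.
    move=> /(_ i j); rewrite !inE => H.
    have iS : [exists v in P, v \in bag i] by apply/exists_inP; exists u.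
    have jS : [exists v in P, v \in bag j] by apply/exists_inP; exists u'.
    have := H iS jS.
    apply: connect_sub => a b /and3P [aS bS tab].
    move: aS bS; rewrite !inE => /exists_inP [x xP xa] /exists_inP [y yP yb].
    apply: connect1; rewrite /= tab fup !inE pW !andbT /=.
    by apply/andP; split; apply/imsetP; [exists x | exists y]; rewrite ?fP.
  have fuu : f u = u by rewrite /f (negbTE uP).
  have u'u : u' = u.
    case: (boolP (u' \in P)) => u'P; last by move: Eu'; rewrite fuu /f (negbTE u'P).
    by move: Eu'; rewrite fuu /f u'P => Ep; rewrite Ep pP in uP.
  rewrite u'u in u'i.
  apply: connect_sub (bconn u i j ui u'i) => a b /and3P [tab ua ub].
  apply: connect1; rewrite /= tab fuu.
  have uW : u \in W by rewrite -fuu.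
  by rewrite -{1}fuu (inb a u) ?fuu // -{1}fuu (inb b u) ?fuu.
- move=> i; apply: leq_trans (wid i).
  apply: leq_trans (leq_imset_card f (bag i)).
  by apply: subset_leq_card; apply: subsetIl.
Qed.

Definition adj (T : finType) (E : rel T) (A B : {set T}) :=
  exists x y, [/\ x \in A, y \in B & E x y].

Lemma adj_sym (T : finType) (E : rel T) A B : symmetric E -> adj E A B -> adj E B A.
Proof. by move=> sE [x [y [xA yB Exy]]]; exists y, x; rewrite sE. Qed.

Definition cset (T : finType) (E : rel T) (A : {set T}) :=
  forall x y, x \in A -> y \in A -> connect (restr A E) x y.

Lemma K4_from (T : finType) (V : {set T}) (E : rel T) (Z1 Z2 Z3 Z4 : {set T}) :
  tw_le V E 2 -> symmetric E ->
  Z1 \subset V -> Z2 \subset V -> Z3 \subset V -> Z4 \subset V ->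
  Z1 != set0 -> Z2 != set0 -> Z3 != set0 -> Z4 != set0 ->
  cset E Z1 -> cset E Z2 -> cset E Z3 -> cset E Z4 ->
  [disjoint Z1 & Z2] -> [disjoint Z1 & Z3] -> [disjoint Z1 & Z4] ->
  [disjoint Z2 & Z3] -> [disjoint Z2 & Z4] -> [disjoint Z3 & Z4] ->
  adj E Z1 Z2 -> adj E Z1 Z3 -> adj E Z1 Z4 ->
  adj E Z2 Z3 -> adj E Z2 Z4 -> adj E Z3 Z4 -> False.
Proof.
move=> tw sE s1 s2 s3 s4 n1 n2 n3 n4 c1 c2 c3 c4 d12 d13 d14 d23 d24 d34
  a12 a13 a14 a23 a24 a34.
pose Z := fun i : 'I_4 => nth set0 [:: Z1; Z2; Z3; Z4] i.
apply: (@noK4 T V E Z tw).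
- by case=> [[|[|[|[|?]]]] ?].
- by case=> [[|[|[|[|?]]]] ?].
- by case=> [[|[|[|[|?]]]] ?].
- case=> [[|[|[|[|?]]]] ?] // [[|[|[|[|?]]]] ?] //= _;
  by rewrite // disjoint_sym.
- case=> [[|[|[|[|?]]]] ?] // [[|[|[|[|?]]]] ?] //= _;
  by [ | apply: adj_sym].
Qed.

Lemma path_conn_set (T : finType) (r : rel T) (x : T) (p : seq T) :
  symmetric r -> path r x p -> cset r [set w | w \in x :: p].
Proof.
move=> sr pth.
set A := [set w | w \in x :: p].
have aux : forall q x', x' \in A -> all (mem A) q -> path r x' q ->
    forall y, y \in x' :: q -> connect (restr A r) x' y.
  elim=> [|z q IH] x' xA /=; first by move=> _ _ y; rewrite inE => /eqP ->.
  case/andP=> zA aq /andP [rxz pq] y; rewrite inE => /orP [/eqP -> //|yq].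
  apply: connect_trans (IH z zA aq pq y yq); apply: connect1.
  by rewrite /restr /= xA zA.
have xA : x \in A by rewrite inE mem_head.
have allA : all (mem A) p by apply/allP => z zp; rewrite !inE zp orbT.
have cx : forall y, y \in A -> connect (restr A r) x y.
  by move=> y; rewrite inE => yp; apply: (aux p x xA allA pth y yp).
move=> y z yA zA; apply: connect_trans (cx z zA).
by rewrite (sym_connect_sym (restr_sym A sr)); apply: cx.
Qed.

Lemma disjP (T : finType) (A B : {set T}) :
  (forall x, x \in A -> x \in B -> False) -> [disjoint A & B].
Proof.
move=> H; rewrite disjoint_subset; apply/subsetP => x xA; rewrite inE /=.
by apply/negP => xB; exact: H x xA xB.
Qed.

Lemma ar1 (x y : nat) : x != y -> 0 < maxn x y.
Proof. move=> H; lia. Qed.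
Lemma ar2 (x y n : nat) : x < n -> y < n -> maxn x y < n.
Proof. move=> *; lia. Qed.
Lemma ar3 (x y : nat) : x < y -> maxn x y = y.
Proof. move=> *; lia. Qed.
Lemma ar4 (x y : nat) : y < x -> maxn x y = x.
Proof. move=> *; lia. Qed.
Lemma ar5 (j n : nat) : j < n -> 0 = n - j -> False.
Proof. move=> *; lia. Qed.

Lemma attach3 (T : finType) (e : rel T) (V B Y : {set T}) a b c :
  symmetric e -> tw_le V e 2 -> B \subset V -> biconnected_set e B ->
  Y \subset V -> [disjoint Y & B] -> Y != set0 -> cset e Y ->
  a \in B -> b \in B -> c \in B -> a != b -> a != c -> b != c ->
  (exists2 y, y \in Y & e y a) -> (exists2 y, y \in Y & e y b) ->
  (exists2 y, y \in Y & e y c) -> False.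
Proof.
move=> se tw sBV [[Bne Bc] Bbi] sYV dYB Yne Yc aB bB cB ab ac bc
  [ya yaY eya] [yb ybY eyb] Hyc.
have bBa : b \in B :\ a by rewrite !inE eq_sym ab bB.
have cBa : c \in B :\ a by rewrite !inE eq_sym ac cB.
have := Bbi a aB b c bBa cBa => /connectP [q0 pth0 Ec].
move: Hyc cB bc ac cBa; rewrite Ec {Ec}.
case: (shortenP pth0) => q pth uq _ {pth0 q0} [yc ycY eyc] cB bc ac cBa.
set w := b :: q.
have wBa : forall z, z \in w -> z \in B :\ a.
  move=> z; rewrite inE => /orP [/eqP -> //|zq].
  exact: (allP (path_restr_all pth)).
pose Qs := [set z | z \in w].
have aQs : a \notin Qs.
  by apply/negP; rewrite inE => /wBa; rewrite !inE eqxx.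
pose Z2 := gcomp e (B :\: Qs) a.
have aR : a \in B :\: Qs by rewrite inE aQs aB.
have sZ2 : Z2 \subset B :\: Qs by apply: comp_sub.
have bQ : b \in Qs by rewrite inE mem_head.
have cQ : last b q \in Qs by rewrite inE mem_last.
have nb : forall qq, qq \in Qs ->
    exists2 q', q' \in Qs & (q' != qq) && [exists z in Z2, e z q'].
  move=> qq qqQ.
  have qqB : qq \in B by move: qqQ; rewrite inE => /wBa; rewrite inE => /andP [].
  pose t := if qq == b then last b q else b.
  have tQ : t \in Qs by rewrite /t; case: ifP.
  have tqq : t != qq.
    rewrite /t; case: (eqVneq qq b) => [->|qqb] //; by rewrite eq_sym.
  have tB : t \in B by move: tQ; rewrite inE => /wBa; rewrite inE => /andP [].
  have aqq : a != qq by apply: contraNneq aQs => ->.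
  have aBq : a \in B :\ qq by rewrite !inE aqq aB.
  have tBq : t \in B :\ qq by rewrite !inE tqq tB.
  have tZ : t \notin Z2.
    by apply/negP => /(subsetP sZ2); rewrite inE tQ.
  have [z [z' [zZ z'Z /and3P [_ z'Bq ezz']]]] :=
    connect_exit (Bbi qq qqB a t aBq tBq) (comp_id e (B :\: Qs) a) tZ.
  have z'Q : z' \in Qs.
    apply: contraNT z'Z => z'Q; apply: (comp_ext zZ (subsetP sZ2 _ zZ)) => //.
    by rewrite in_setD z'Q; move: z'Bq; rewrite !inE => /andP [_ ->].
  exists z' => //; move: z'Bq; rewrite !inE => /andP [-> _] /=.
  by apply/exists_inP; exists z.
have [q1 q1Q /andP [q1b a1]] := nb b bQ.
have [q2 q2Q /andP [q21 a2]] := nb q1 q1Q.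
have q1w : q1 \in w by rewrite inE in q1Q.
have q2w : q2 \in w by rewrite inE in q2Q.
have i12 : index q1 w != index q2 w.
  apply: contra q21 => /eqP H; apply/eqP; apply: (index_inj b q2w q1w); by rewrite H.
pose k := maxn (index q1 w) (index q2 w).
have k1 : 0 < k by apply: ar1.
have kw : k < size w.
  by apply: ar2; rewrite index_mem.
pose j := k.-1.
have kj : k = j.+1 by rewrite /j prednK.
have jq : j < size q by move: kw; rewrite /w /= kj.
have tw' : take k w = b :: take j q by rewrite kj.
have dw' : drop k w = drop j q by rewrite kj.
have uw : uniq (take k w ++ drop k w) by rewrite cat_take_drop.
have memT : forall z, z \in w -> (z \in b :: take j q) = (index z w < k).
  by move=> z zw; rewrite -tw' in_take.
have memD : forall z, z \in w -> (z \in drop j q) = ~~ (index z w < k).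
  move=> z zw; rewrite -memT // -tw' -dw'.
  move: zw; rewrite -{1}(cat_take_drop k w) mem_cat.
  case: (boolP (z \in take k w)) => zt /=; last by move=> ->.
  move=> _; apply/negP => zd; move: uw; rewrite cat_uniq => /and3P [_ H _].
  by apply: (negP H); apply/hasP; exists z.
have pe : path e b q by apply: sub_path pth => x y /and3P [].
move: pe; rewrite -(cat_take_drop j q) cat_path => /andP [p3 p4].
case Ed: (drop j q) p4 memD => [|r0 R] p4 memD.
  by move: (size_drop j q); rewrite Ed /=; apply: ar5.
move: p4 => /= /andP [elast p4].
set Z3 := [set z | z \in b :: take j q].
set Z4 := [set z | z \in r0 :: R].
have sZ3 : forall z, z \in Z3 -> z \in Qs.
  move=> z; rewrite !inE => /orP [/eqP ->|zt]; first by rewrite eqxx.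
  by rewrite (mem_take zt) orbT.
have sZ4 : forall z, z \in Z4 -> z \in Qs.
  move=> z; rewrite !inE => zd; have : z \in drop j q by rewrite Ed.
  by move/mem_drop => ->; rewrite orbT.
have ZB : forall z, z \in Qs -> z \in B.
  by move=> z; rewrite inE => /wBa; rewrite inE => /andP [].
have Z2B : forall z, z \in Z2 -> z \in B.
  by move=> z /(subsetP sZ2); rewrite inE => /andP [].
have Z2Q : forall z, z \in Z2 -> z \notin Qs.
  by move=> z /(subsetP sZ2); rewrite inE => /andP [].
have sub : forall A : {set T}, (forall z, z \in A -> z \in B) -> A \subset V.
  by move=> A H; apply/subsetP => z /H /(subsetP sBV).
have dY : forall A : {set T}, (forall z, z \in A -> z \in B) -> [disjoint Y & A].
  move=> A H; apply: disjP => z zY /H zB.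
  by move: (disjointFr dYB zY); rewrite zB.
have in34 : forall z, z \in w -> (z \in Z3) = (index z w < k) /\ (z \in Z4) = ~~ (index z w < k).
  by move=> z zw; rewrite !in_set memT // memD.
have adj23 : adj e Z2 Z3 /\ adj e Z2 Z4.
  case/existsP: a1 => z1 /andP [z1Z e1]; case/existsP: a2 => z2 /andP [z2Z e2].
  have [h31 h41] := in34 q1 q1w; have [h32 h42] := in34 q2 q2w.
  case: (ltngtP (index q1 w) (index q2 w)) => H; last by move: i12; rewrite H eqxx.
    have kk : k = index q2 w by rewrite /k ar3.
    split; [exists z1, q1 | exists z2, q2]; split=> //.
      by rewrite h31 kk.
    by rewrite h42 kk ltnn.
  have kk : k = index q1 w by rewrite /k ar4.
  split; [exists z2, q2 | exists z1, q1]; split=> //.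
    by rewrite h32 kk.
  by rewrite h41 kk ltnn.
apply: (@K4_from T V e Y Z2 Z3 Z4 tw se) => //.
- by apply: sub => z /Z2B.
- by apply: sub => z /sZ3 /ZB.
- by apply: sub => z /sZ4 /ZB.
- by apply/set0Pn; exists a; apply: comp_id.
- by apply/set0Pn; exists b; rewrite inE mem_head.
- by apply/set0Pn; exists r0; rewrite inE mem_head.
- by apply: comp_conn.
- exact: path_conn_set se p3.
- exact: path_conn_set se p4.
- by apply: dY => z /Z2B.
- by apply: dY => z /sZ3 /ZB.
- by apply: dY => z /sZ4 /ZB.
- apply: disjP => z /Z2Q zQ /sZ3; by rewrite (negbTE zQ).
- apply: disjP => z /Z2Q zQ /sZ4; by rewrite (negbTE zQ).
- apply: disjP => z; rewrite !inE => z3 z4.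
  move: uq; rewrite -(cat_take_drop j q) Ed -cat_cons cat_uniq => /and3P [_ H _].
  by apply: (negP H); apply/hasP; exists z.
- by exists ya, a; rewrite yaY eya comp_id.
- by exists yb, b; rewrite ybY eyb inE mem_head.
- exists yc, (last b q); rewrite ycY eyc; split=> //.
  have : last b q \in drop j q.
    rewrite -{1}(cat_take_drop j q) last_cat Ed /=; exact: mem_last.
  by rewrite Ed /Z4 in_set.
- by case: adj23.
- by case: adj23.
- by exists (last b (take j q)), r0; rewrite /Z3 /Z4 !in_set mem_head mem_last elast.
Qed.

Lemma card_bigcup_le (T I : finType) (X : {set I}) (A : I -> {set T}) :
  #|\bigcup_(x in X) A x| <= \sum_(x in X) #|A x|.
Proof.
apply: (big_rec2 (fun (U : {set T}) n => #|U| <= n)); first by rewrite cards0.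
move=> i U n _ H; apply: leq_trans (leq_card_setU _ _) _; exact: leq_add.
Qed.

Lemma three_of (T : finType) (A : {set T}) :
  2 < #|A| -> exists a b c, [/\ a \in A, b \in A, c \in A & [/\ a != b, a != c & b != c]].
Proof.
move=> H; have : A != set0 by rewrite -card_gt0; apply: leq_trans H.
case/set0Pn => a aA.
have : 1 < #|A :\ a| by move: H; rewrite (cardsD1 a A) aA add1n ltnS.
case/card_gt1P => b [c [bA cA bc]].
move: bA cA; rewrite !inE => /andP [ba bA] /andP [ca cA].
by exists a, b, c; split=> //; split; rewrite // eq_sym.
Qed.

Lemma neighbour_in (T : finType) (e : rel T) (B : {set T}) u u' :
  connected_set e B -> u \in B -> u' \in B -> u' != u ->
  exists2 z, z \in B :\ u & e u z.
Proof.
move=> [_ Bc] uB u'B u'u.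
have u'n : u' \notin [set u] by rewrite in_set1.
have [z [z' [zi z'i /and3P [_ z'B ezz']]]] :=
  connect_exit (Bc u u' uB u'B) (set11 u) u'n.
move: zi z'i ezz'; rewrite !in_set1 => /eqP -> z'u ezz'.
by exists z'; rewrite // !inE z'u z'B.
Qed.

Theorem mainTheorem10 (T : finType) (e : rel T) (t : nat)
  (e_sym : symmetric e) (e_irr : irreflexive e)
  (nontriv : ~ trivial_instance e t)
  (X : {set T}) (tidyX : tidy_modulator e X)
  (B : {set T}) (B_sub : B \subset ~: X) (B_bic : biconnected_set e B) :
  #|boundary e B| <= 2 * #|X|.
Proof.
case: tidyX => modX tidyx.
have [[Bne Bc] Bbi] := B_bic.
have BX : forall z, z \in B -> z \notin X.
  by move=> z /(subsetP B_sub); rewrite inE.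
pose Yx := fun x => gcomp e ((~: (X :\ x)) :\: B) x.
pose Ax := fun x => [set u in B | [exists y in Yx x, e y u]].
have xW : forall x, x \in X -> x \in (~: (X :\ x)) :\: B.
  move=> x xX; rewrite !inE eqxx /=; apply/andP; split=> //.
  by apply/negP => /BX; rewrite xX.
have Bsub' : forall x, B \subset ~: (X :\ x).
  move=> x; apply/subsetP => z zB; rewrite !inE (negbTE (BX z zB)) andbF //.
have claim1 : forall x, x \in X -> #|Ax x| <= 2.
  move=> x xX; rewrite leqNgt; apply/negP => /three_of [a [b [c [aA bA cA [ab ac bc]]]]].
  move: aA bA cA; rewrite !inE => /andP [aB /exists_inP [ya yaY eya]]
    /andP [bB /exists_inP [yb ybY eyb]] /andP [cB /exists_inP [yc ycY eyc]].
  have sY : Yx x \subset (~: (X :\ x)) :\: B by apply: comp_sub; apply: xW.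
  apply: (@attach3 T e (~: (X :\ x)) B (Yx x) a b c e_sym (tidyx x xX) (Bsub' x)
            B_bic) => //.
  - by apply: subset_trans sY (subsetDl _ _).
  - apply: disjP => z /(subsetP sY); rewrite inE => /andP [zB _] zB'.
    by rewrite zB' in zB.
  - by apply/set0Pn; exists x; apply: comp_id.
  - by move=> y z; apply: comp_conn.
  - by exists ya.
  - by exists yb.
  - by exists yc.
have claim2 : boundary e B \subset \bigcup_(x in X) Ax x.
  apply/subsetP => u; rewrite inE => /andP [uB /existsP [v /andP [vB euv]]].
  case: (boolP (v \in X)) => vX.
    apply/bigcupP; exists v => //; rewrite inE uB /=.
    by apply/exists_inP; exists v; [apply: comp_id | rewrite e_sym].
  pose R := ~: X :\: B.
  have vR : v \in R by rewrite !inE vX vB.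
  pose C := gcomp e R v.
  have sCR : C \subset R by apply: comp_sub.
  have CB : forall z, z \in C -> z \notin B.
    by move=> z /(subsetP sCR); rewrite inE => /andP [].
  have CX : forall z, z \in C -> z \notin X.
    by move=> z /(subsetP sCR); rewrite !inE => /andP [_].
  case: (boolP [exists w in C, exists x in X, e w x]).
    case/exists_inP => w wC /exists_inP [x xX ewx].
    apply/bigcupP; exists x => //; rewrite inE uB /=.
    apply/exists_inP; exists v; last by rewrite e_sym.
    rewrite inE.
    have RW : R \subset (~: (X :\ x)) :\: B.
      apply/subsetP => z; rewrite !inE => /andP [zB zX]; by rewrite zB (negbTE zX) andbF.
    have c1 : connect (restr ((~: (X :\ x)) :\: B) e) x w.
      by apply: connect1; rewrite /restr /= (xW x xX) (subsetP RW _ (subsetP sCR _ wC)) e_sym.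
    apply: connect_trans c1 _.
    apply: (restr_mono RW).
    apply: (restr_mono sCR); exact: (comp_conn e_sym wC (comp_id e R v)).
  rewrite negb_exists_in => /forall_inP noX.
  exfalso; apply: nontriv; apply: Or44.
  have nbhB : forall z, z \in nbh e C -> z \in B.
    move=> z; rewrite inE => /andP [zC /exists_inP [w wC ewz]].
    have zX : z \notin X.
      apply/negP => zX; move: (noX w wC) => /exists_inP []; by exists z.
    apply: contraNT zC => zB; apply: (comp_ext wC (subsetP sCR _ wC)) => //.
    by rewrite !inE zB zX.
  have uN : u \in nbh e C.
    rewrite inE; apply/andP; split; first by apply: contraTN uB => /CB.
    by apply/exists_inP; exists v; [apply: comp_id | rewrite e_sym].
  have N2 : #|nbh e C| <= 2.
    rewrite leqNgt; apply/negP => /three_of [a [b [c [aN bN cN [ab ac bc]]]]].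
    move: (aN) (bN) (cN); rewrite !inE => /andP [_ /exists_inP [ya yaY eya]]
      /andP [_ /exists_inP [yb ybY eyb]] /andP [_ /exists_inP [yc ycY eyc]].
    apply: (@attach3 T e (~: X) B C a b c e_sym modX B_sub B_bic) => //.
    - by apply: subset_trans sCR (subsetDl _ _).
    - by apply: disjP => z /CB /negbTE ->.
    - by apply/set0Pn; exists v; apply: comp_id.
    - by move=> y z; apply: comp_conn.
    - exact: nbhB.
    - exact: nbhB.
    - exact: nbhB.
    - by exists ya.
    - by exists yb.
    - by exists yc.
  exists C, e; split.
    split=> //; first by apply/set0Pn; exists v; apply: comp_id.
    by move=> x y; apply: comp_conn.
  have WV : C :|: nbh e C \subset ~: X.
    apply/subsetP => z; rewrite inE => /orP [/CX|/nbhB /BX]; by rewrite inE.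
  case: (boolP [exists u' in nbh e C, u' != u]).
    case/exists_inP => u' u'N u'u.
    have Nuu : forall z, z \in nbh e C -> z = u \/ z = u'.
      move=> z zN; case: (eqVneq z u) => [|zu]; first by left.
      case: (eqVneq z u') => [|zu']; first by right.
      have : 2 < #|nbh e C|.
        rewrite (cardsD1 u) uN (cardsD1 u') in_setD1 u'u u'N /=.
        rewrite !add1n !ltnS card_gt0; apply/set0Pn; exists z.
        by rewrite !in_setD1 zu zu' zN.
      by rewrite ltnNge N2.
    have u'B := nbhB _ u'N; have uB' := nbhB _ uN.
    have [z0 z0P euz0] := neighbour_in (proj1 B_bic) uB' u'B u'u.
    apply: (tw_mono (E := crel e (B :\ u) u')).
      apply: (contract modX WV).
      - by apply: subset_trans (subsetDl _ _) B_sub.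
      - by rewrite !inE u'u u'B.
      - by rewrite inE u'N orbT.
      - move=> w; rewrite inE => /orP [/CB wB|/Nuu [->|-> //]]; rewrite !inE.
          by rewrite (negbTE wB) andbF.
        by rewrite eqxx.
      - by move=> x y xP yP; exact: (Bbi u uB' x y xP yP).
    move=> a b _ _ /= /orP [Eab|/and3P [aN bN ab]].
      by rewrite /crel /= Eab.
    rewrite /crel /=.
    move: ab; case: (Nuu a aN) => ->; case: (Nuu b bN) => -> ab.
    - by rewrite eqxx in ab.
    - by rewrite eqxx /=; apply/orP; left; apply/orP; right; apply/exists_inP; exists z0.
    - by rewrite eqxx /=; apply/orP; right; apply/exists_inP; exists z0.
    - by rewrite eqxx in ab.
  rewrite negb_exists_in => /forall_inP Nu.
  have Nu' : forall z, z \in nbh e C -> z = u.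
    by move=> z /Nu; rewrite negbK => /eqP.
  apply: (tw_mono (E := crel e [set u] u)).
    apply: (contract modX WV).
    - by apply/subsetP => z; rewrite inE => /eqP ->; apply: (subsetP B_sub); apply: nbhB.
    - by rewrite inE.
    - by rewrite inE uN orbT.
    - by move=> w _; rewrite inE => /eqP.
    - by move=> x y; rewrite !inE => /eqP -> /eqP ->; apply: connect0.
  move=> a b _ _ /= /orP [Eab|/and3P [aN bN ab]].
    by rewrite /crel /= Eab.
  by move: ab; rewrite (Nu' a aN) (Nu' b bN) eqxx.
have := subset_leq_card claim2 => H; apply: leq_trans H _.
apply: leq_trans (card_bigcup_le X Ax) _.
rewrite mulnC -sum_nat_const; exact: leq_sum.
Qed.
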